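(* Every monomial ideal of $\mathcal{A}$ is finitely generated.
   Context: Let $\mathbf{k}$ be a commutative noetherian ring, $r$ a positive integer, $x_1,\dots,x_r$ the standard basis of $\mathbf{k}^r$, and $\mathcal{A}=\bigoplus_{n,d\ge0}(\mathrm{Sym}^d\mathbf{k}^r)^{\otimes n}$, bigraded by $(d,n)$. For a split $\sigma$ of $[n+m]$ (subset $\{i_1<\cdots<i_n\}$ and complement $\{j_1<\cdots<j_m\}$), $\cdot_\sigma:(\mathrm{Sym}^d\mathbf{k}^r)^{\otimes n}\otimes(\mathrm{Sym}^d\mathbf{k}^r)^{\otimes m}\to(\mathrm{Sym}^d\mathbf{k}^r)^{\otimes(n+m)}$ places the first argument's factors in positions $i_k$ and the second's in positions $j_k$; it is $0$ on other bidegrees. $*:(\mathrm{Sym}^d\mathbf{k}^r)^{\otimes n}\otimes(\mathrm{Sym}^e\mathbf{k}^r)^{\otimes n}\to(\mathrm{Sym}^{d+e}\mathbf{k}^r)^{\otimes n}$ is factorwise multiplication, $0$ on other bidegrees. An ideal is a bihomogeneous subspace $I$ with $g*f,\ g\cdot_\sigma f\in I$ for all $f\in I$, $g\in\mathcal{A}$, splits $\sigma$; the ideal generated by a set is the smallest ideal containing it. A monomial is $w_1\otimes\cdots\otimes w_n$ with each $w_i$ a scalar multiple of a monomial in $x_1,\dots,x_r$; a monomial ideal is an ideal generated by monomials. *)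

(* Defs.v *)
From mathcomp Require Import all_boot all_algebra.
From Stdlib Require List.
Set Implicit Arguments. Unset Strict Implicit. Unset Printing Implicit Defensive.
Import GRing.Theory.
Local Open Scope ring_scope.

Definition ring_ideal (k : comPzRingType) (J : k -> Prop) : Prop :=
  [/\ J 0, (forall x y, J x -> J y -> J (x + y)) & (forall c x, J x -> J (c * x))].

Definition noetherian (k : comPzRingType) : Prop :=
  forall J : k -> Prop, ring_ideal J ->
    exists s : seq k, forall x, J x <->
      exists c : 'I_(size s) -> k, x = \sum_(i < size s) c i * s`_i.

(* Monomials of degree d in x_1..x_r, as exponent vectors. These form the
   standard basis of Sym^d k^r. *)
Definition mon (r d : nat) : Type :=
  {a : {ffun 'I_r -> 'I_d.+1} | \sum_(j < r) (a j : nat) == d}.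

(* Standard basis of (Sym^d k^r)^{(x) n}: n-tuples of degree-d monomials
   (w_1 (x) ... (x) w_n). *)
Definition basis (r d n : nat) : finType := {ffun 'I_n -> mon r d}.

(* The bihomogeneous component (Sym^d k^r)^{(x) n} of A, identified with
   the free k-module on [basis r d n] (coefficient functions). *)
Definition comp (k : comPzRingType) (r d n : nat) := {ffun basis r d n -> k}.

Definition cscale (k : comPzRingType) r d n (c : k) (F : comp k r d n)
  : comp k r d n := [ffun w => c * F w].

(* Split sigma of [n+m] given by i_1<..<i_n (ifun) and j_1<..<j_m (jfun):
   strictly increasing maps with disjoint images. *)
Definition is_split (n m : nat) (ifun : 'I_n -> 'I_(n + m))
  (jfun : 'I_m -> 'I_(n + m)) : Prop :=
  [/\ (forall a b : 'I_n, (a < b)%N -> (ifun a < ifun b)%N),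
      (forall a b : 'I_m, (a < b)%N -> (jfun a < jfun b)%N) &
      (forall a b, ifun a != jfun b)].

(* g ._sigma f : factors of g go to positions i_k, those of f to j_k.
   On coefficients: the coefficient of the basis tensor w is
   G(w o i) * F(w o j). *)
Definition split_mul (k : comPzRingType) r d n m
  (ifun : 'I_n -> 'I_(n + m)) (jfun : 'I_m -> 'I_(n + m))
  (G : comp k r d n) (F : comp k r d m) : comp k r d (n + m) :=
  [ffun w : basis r d (n + m) =>
     G [ffun a => w (ifun a)] * F [ffun b => w (jfun b)]].

(* Factorwise multiplication g * f : (d,n) x (e,n) -> (d+e,n). *)
Definition star_mul (k : comPzRingType) r d e n
  (G : comp k r d n) (F : comp k r e n) : comp k r (d + e) n :=
  [ffun w : basis r (d + e) n =>
     \sum_(t : basis r d n) \sum_(u : basis r e n)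
       (if [forall a, forall j, (val (w a) j : nat) == (val (t a) j : nat) + (val (u a) j : nat)]%N
        then G t * F u else 0)].

(* A bihomogeneous subspace of A is given by its family of components. *)
Definition bisubset (k : comPzRingType) (r : nat) :=
  forall d n : nat, comp k r d n -> Prop.

Definition subset_of k r (X Y : bisubset k r) : Prop :=
  forall d n F, X d n F -> Y d n F.

Definition is_ideal (k : comPzRingType) (r : nat) (I : bisubset k r) : Prop :=
  [/\
      (forall d n, I d n 0),
      (forall d n F G, I d n F -> I d n G -> I d n (F + G)),
      (forall d n c F, I d n F -> I d n (cscale c F)),
      (forall d e n (G : comp k r e n) (F : comp k r d n),
          I d n F -> I (e + d)%N n (star_mul G F)) &
      (forall d n m ifun jfun (G : comp k r d n) (F : comp k r d m),
          is_split ifun jfun -> I d m F -> I d (n + m)%N (split_mul ifun jfun G F))].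

Definition generated_by k r (X I : bisubset k r) : Prop :=
  [/\ is_ideal I, subset_of X I &
      forall J, is_ideal J -> subset_of X J -> subset_of I J].

Definition is_monomial k r d n (F : comp k r d n) : Prop :=
  exists (c : k) (t : basis r d n), F = [ffun w => if w == t then c else 0].

Definition monomial_ideal k r (I : bisubset k r) : Prop :=
  exists X : bisubset k r,
    (forall d n F, X d n F -> is_monomial F) /\ generated_by X I.

Definition of_seq k r (s : seq {d : nat & {n : nat & comp k r d n}})
  : bisubset k r :=
  fun d n F => Stdlib.Lists.List.In (existT _ d (existT _ n F)) s.

Definition finitely_generated k r (I : bisubset k r) : Prop :=
  exists s, generated_by (of_seq s) I.

(* Main.v *)
Require Import Defs.
From mathcomp Require Import all_boot all_algebra.
From Stdlib Require Import Classical ClassicalEpsilon.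
Require Import Defs.
Set Implicit Arguments. Unset Strict Implicit. Unset Printing Implicit Defensive.
Import GRing.Theory.


Definition good {T} (R : T -> T -> Prop) (f : nat -> T) :=
  exists i j, (i < j)%N /\ R (f i) (f j).
Definition wqo {T} (R : T -> T -> Prop) := forall f : nat -> T, good R f.
Definition ptrans {T} (R : T -> T -> Prop) := forall x y z, R x y -> R y z -> R x z.

Lemma cid_fun {A B} (P : A -> B -> Prop) : (forall a, exists b, P a b) ->
  exists g : A -> B, forall a, P a (g a).
Proof.
move=> H; exists (fun a => proj1_sig (constructive_indefinite_description _ (H a))).
by move=> a; case: (constructive_indefinite_description _ _).
Qed.

Lemma ex_minP (P : nat -> Prop) : (exists n, P n) ->
  exists m, P m /\ forall n, P n -> m <= n.
Proof.
move=> [n Pn]; apply: NNPP => nm.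
suff H : forall n m, m <= n -> ~ P m by apply: (H n n).
elim=> [|n' IH] m.
  rewrite leqn0 => /eqP -> P0; apply: nm; exists 0; split=> //.
rewrite leq_eqVlt => /orP[/eqP->|/IH//] Pm; apply: nm; exists n'.+1; split=> //.
move=> q Pq; rewrite leqNgt; apply/negP => lt; exact: IH q lt Pq.
Qed.

Lemma incr_mono (h : nat -> nat) : (forall n, h n < h n.+1) ->
  forall i j, i < j -> h i < h j.
Proof.
move=> H i j; elim: j => // j IH; rewrite ltnS leq_eqVlt => /orP[/eqP->//|/IH].
by move=> lt; apply: ltn_trans lt (H j).
Qed.

Lemma incr_ge (h : nat -> nat) : (forall n, h n < h n.+1) -> forall i, h 0 <= h i.
Proof. by move=> H [|i] //; apply/ltnW/incr_mono. Qed.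

Lemma chain_pair {T} (R : T -> T -> Prop) (x : nat -> T) : ptrans R ->
  (forall i, R (x i) (x i.+1)) -> forall i j, i < j -> R (x i) (x j).
Proof.
move=> tR H i j; elim: j => // j IH; rewrite ltnS leq_eqVlt => /orP[/eqP->//|/IH].
by move=> lt; apply: tR lt (H j).
Qed.

Lemma wqo_asc {T} (R : T -> T -> Prop) : wqo R -> ptrans R -> forall f : nat -> T,
  exists phi : nat -> nat, (forall i, phi i < phi i.+1) /\
     forall i j, i < j -> R (f (phi i)) (f (phi j)).
Proof.
move=> wR tR f.
have [N HN] : exists N, forall i, N <= i -> exists j, i < j /\ R (f i) (f j).
  apply: NNPP => nN.
  have H1 : forall N, exists i, N <= i /\ ~ exists j, i < j /\ R (f i) (f j).
    move=> N; apply: NNPP => nE; apply: nN; exists N => i Ni.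
    apply: NNPP => nj; apply: nE; by exists i.
  have [t Ht] := cid_fun H1.
  pose h := fix h n := if n is n'.+1 then t (h n').+1 else t 0.
  have hinc : forall n, h n < h n.+1 by move=> n /=; case: (Ht (h n).+1).
  have [i [j [ij Rij]]] := wR (fun n => f (h n)).
  have hterm : forall n, ~ exists j, h n < j /\ R (f (h n)) (f j).
    by case=> [|n]; [case: (Ht 0) | case: (Ht (h n).+1)].
  by apply: (hterm i); exists (h j); split=> //; apply: incr_mono.
have H2 : forall i, exists j, N <= i -> i < j /\ R (f i) (f j).
  move=> i; case: (leqP N i) => Ni; first by have [j ?] := HN i Ni; exists j.
  by exists 0.
have [g Hg] := cid_fun H2.
pose phi n := iter n g N.
have pN : forall n, N <= phi n.
  elim=> //= n IH; by case: (Hg _ IH) => /ltnW/(leq_trans IH).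
exists phi; split; first by move=> n; case: (Hg _ (pN n)).
apply: (chain_pair (x := fun n => f (phi n))) => // n; by case: (Hg _ (pN n)).
Qed.

Lemma wqo_prod {T} (R1 R2 : T -> T -> Prop) : wqo R1 -> ptrans R1 -> wqo R2 ->
  wqo (fun a b => R1 a b /\ R2 a b).
Proof.
move=> w1 t1 w2 f; have [phi [inc H]] := wqo_asc w1 t1 f.
have [i [j [ij R]]] := w2 (fun n => f (phi n)).
exists (phi i), (phi j); split; first exact: incr_mono.
by split=> //; apply: H.
Qed.

Lemma wqo_pull {T U} (R : U -> U -> Prop) (h : T -> U) : wqo R ->
  wqo (fun a b => R (h a) (h b)).
Proof. by move=> w f; apply: (w (fun n => h (f n))). Qed.

Lemma wqo_ext {T} (R1 R2 : T -> T -> Prop) : (forall a b, R1 a b -> R2 a b) ->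
  wqo R1 -> wqo R2.
Proof. by move=> H w f; have [i [j [? ?]]] := w f; exists i, j; split=> //; apply: H. Qed.

Lemma wqo_nat : wqo (fun a b : nat => a <= b).
Proof.
move=> f.
have ex : exists m, exists i, f i = m by exists (f 0), 0.
case: (ex_minP ex) => m [[i fi] Hm].
exists i, i.+1; split=> //; rewrite fi; apply: Hm; by exists i.+1.
Qed.

Definition dle {J} (s : seq J) (a b : J -> nat) : Prop :=
  forall j, List.In j s -> a j <= b j.

Lemma wqo_dickson {J} (s : seq J) : wqo (dle s).
Proof.
elim: s => [|j0 s IH].
  by move=> f; exists 0, 1; split=> // j [].
apply: (wqo_ext (R1 := fun a b => a j0 <= b j0 /\ dle s a b)).
  by move=> a b [H1 H2] j /= [<-//|/H2].
apply: wqo_prod => //; first exact: (wqo_pull (fun a => a j0) wqo_nat).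
by move=> x y z /= ; apply: leq_trans.
Qed.

Lemma ptrans_dle {J} (s : seq J) : ptrans (dle s).
Proof. by move=> x y z H1 H2 j jin; apply: leq_trans (H1 j jin) (H2 j jin). Qed.

Section Higman.
Variable T : Type.
Variable R : T -> T -> Prop.

Inductive emb : seq T -> seq T -> Prop :=
| emb_nil t : emb [::] t
| emb_skip s b t : emb s t -> emb s (b :: t)
| emb_cons a b s t : R a b -> emb s t -> emb (a :: s) (b :: t).

Lemma emb_behead b t z : emb (b :: t) z -> emb t z.
Proof.
elim: z => [|c z IH] H; first by inversion H.
inversion H; subst; first by apply: emb_skip; apply: IH.
by apply: emb_skip.
Qed.

Lemma emb_trans : ptrans R -> ptrans emb.
Proof.
move=> tR x y z H; elim: H z => [t|s b t _ IH|a b s t Rab _ IH] z H2.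
- exact: emb_nil.
- by apply: IH; apply: emb_behead H2.
- elim: z H2 => [|c z IHz] H2; first by inversion H2.
  inversion H2; subst; first by apply: emb_skip; apply: IHz.
  by apply: emb_cons; [exact: tR Rab _ | exact: IH].
Qed.

Definition bad (f : nat -> seq T) := forall i j, i < j -> ~ emb (f i) (f j).

Theorem higman : wqo R -> ptrans R -> wqo emb.
Proof.
move=> wR tR f0; apply: NNPP => nG.
have bf0 : bad f0 by move=> i j ij E; apply: nG; exists i, j.
pose Ext (pre : seq (seq T)) := exists f, bad f /\
   forall i, i < size pre -> f i = nth [::] pre i.
have Step : forall pre, exists w, (exists w', Ext (rcons pre w')) ->
    Ext (rcons pre w) /\ forall w', Ext (rcons pre w') -> size w <= size w'.
  move=> pre; case: (classic (exists w', Ext (rcons pre w'))) => [ex|nex]; last first.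
    by exists [::].
  have ex' : exists m, exists w', Ext (rcons pre w') /\ size w' = m.
    by case: ex => w' ?; exists (size w'), w'.
  case: (ex_minP ex') => m [[w [Ew sw]] Hm].
  exists w => _; split=> // w' Ew'; rewrite sw; apply: Hm; by exists w'.
have [nxt Hnxt] := cid_fun Step.
pose pre n := iter n (fun p => rcons p (nxt p)) [::].
have spre : forall n, size (pre n) = n by elim=> //= n IH; rewrite size_rcons IH.
have Epre : forall n, Ext (pre n).
  elim=> [|n [f [bf Hf]]]; first by exists f0.
  have ex : exists w', Ext (rcons (pre n) w').
    exists (f n), f; split=> // i; rewrite size_rcons ltnS nth_rcons spre.
    by rewrite leq_eqVlt => /orP[/eqP->|lt]; rewrite ?ltnn ?eqxx // lt Hf ?spre.
  by case: (Hnxt _ ex).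
pose g n := nth [::] (pre n.+1) n.
have preg : forall m n, n < m -> nth [::] (pre m) n = g n.
  elim=> // m IH n; rewrite ltnS leq_eqVlt => /orP[/eqP->|lt].
    by [].
  by rewrite /= nth_rcons spre lt IH.
have bg : bad g.
  move=> i j ij; case: (Epre j.+1) => f [bf Hf].
  rewrite -(preg j.+1 i) ?(leq_trans ij) // -(preg j.+1 j) //.
  by rewrite -!Hf ?spre ?(leq_trans ij) //; apply: bf.
have gne : forall n, g n <> [::].
  by move=> n E; apply: (bg n n.+1) => //; rewrite E; apply: emb_nil.
have gmin : forall n w', Ext (rcons (pre n) w') -> size (g n) <= size w'.
  move=> n w' E; have ex : exists w', Ext (rcons (pre n) w') by exists w'.
  by case: (Hnxt _ ex) => _ H; rewrite /g /= nth_rcons spre ltnn eqxx; apply: H.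
case E0: (g 0) => [|x0 s0]; first by have := gne 0.
pose a n := head x0 (g n); pose t n := behead (g n).
have gat : forall n, g n = a n :: t n by move=> n; rewrite /a /t; case: (g n) (gne n).
have [phi [inc Hphi]] := wqo_asc wR tR a.
pose p0 := phi 0.
pose h m := if m < p0 then g m else t (phi (m - p0)).
have Eh : Ext (rcons (pre p0) (t p0)).
  exists h; split.
    move=> i j ij; rewrite /h.
    case: (ltnP j p0) => jp.
      by rewrite (ltn_trans ij jp); apply: bg.
    case: (ltnP i p0) => ip.
      move=> E; apply: (bg i (phi (j - p0))).
        by apply: (leq_trans ip); apply: incr_ge.
      by rewrite (gat (phi _)); apply: emb_skip.
    move=> E; apply: (bg (phi (i - p0)) (phi (j - p0))).
      by apply: incr_mono => //; rewrite ltn_sub2r // (leq_ltn_trans ip).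
    rewrite !gat; apply: emb_cons => //; apply: Hphi.
    by rewrite ltn_sub2r // (leq_ltn_trans ip).
  move=> i; rewrite size_rcons spre ltnS nth_rcons spre /h.
  rewrite leq_eqVlt => /orP[/eqP->|lt]; first by rewrite ltnn subnn eqxx.
  by rewrite lt preg.
have := gmin _ _ Eh; rewrite gat /=; by rewrite ltnn.
Qed.
End Higman.
Section B.
Variable k : comPzRingType.
Variable r : nat.
Hypothesis hr : (0 < r)%N.

Definition mono d n (c : k) (t : basis r d n) : comp k r d n :=
  [ffun w => if w == t then c else 0%R].

Definition expo d (a : mon r d) : 'I_r -> nat := fun j => val (val a j).

Definition tseq d n (t : basis r d n) : seq (mon r d) := fgraph t.
Definition word d n (t : basis r d n) : seq ('I_r -> nat) := map (@expo d) (tseq t).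

Definition ple (a b : 'I_r -> nat) : Prop := forall j, (a j <= b j)%N.

Definition ble d n (t : basis r d n) d' n' (w : basis r d' n') : Prop :=
  (d <= d')%N /\ emb ple (word t) (word w).

Lemma basis_ext d n (x y : basis r d n) :
  (forall a j, expo (x a) j = expo (y a) j) -> x = y.
Proof.
move=> H; apply/ffunP => a; apply: val_inj; apply/ffunP => j; apply: val_inj.
exact: H.
Qed.

Lemma expo_sum d (a : mon r d) : \sum_j expo a j = d.
Proof. by case: a => f fP; apply/eqP; exact: fP. Qed.

Lemma expo_le d (a : mon r d) j : expo a j <= d.
Proof. by rewrite -ltnS; apply: ltn_ord. Qed.

Definition mon0 d : mon r d.
Proof.
exists [ffun j : 'I_r => if val j == 0%N then (inord d : 'I_d.+1) else ord0].
rewrite (bigD1 (Ordinal hr)) //= ffunE /= inordK // big1 ?addr0 //.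
by move=> j nj; rewrite ffunE; case: ifP => // /eqP E; case/eqP: nj; apply: val_inj.
Defined.


Lemma emb_map (A C : Type) (B : eqType) (R : C -> C -> Prop) (f : A -> C) (g : B -> C)
  (u : seq B) : forall s, emb R (map f s) (map g u) ->
  exists s', subseq s' u /\ size s' = size s /\
     forall i x0 y0, (i < size s)%N -> R (f (nth x0 s i)) (g (nth y0 s' i)).
Proof.
elim: u => [|b u IH] [|a s] H.
- by exists [::].
- by inversion H.
- by exists [::]; split; [rewrite sub0seq|].
- inversion H; subst.
    have [s' [s1 [s2 s3]]] := IH _ ltac:(eassumption).
    exists s'; split=> //; apply: (subseq_trans s1); exact: subseq_cons.
  have [s' [s1 [s2 s3]]] := IH _ ltac:(eassumption).
  exists (b :: s'); split; first by rewrite /= eqxx.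
  split; first by rewrite /= s2.
  by move=> [|i] x0 y0 //= /s3; apply.
Qed.

Lemma emb_nth (C : Type) (R : C -> C -> Prop) (x0 : C) : forall s1 s2,
  size s1 = size s2 -> (forall i, (i < size s1)%N -> R (nth x0 s1 i) (nth x0 s2 i)) ->
  emb R s1 s2.
Proof.
elim=> [|a s1 IH] [|b s2] //=; first by move=> *; exact: emb_nil.
move=> [E] H; apply: emb_cons; first exact: (H 0).
by apply: IH => // i lt; apply: (H i.+1).
Qed.

Lemma emb_subseq (C : eqType) (D : Type) (R : D -> D -> Prop) (h : C -> D) :
  (forall x, R x x) ->
  forall s1 s2, subseq s1 s2 -> emb R (map h s1) (map h s2).
Proof.
move=> Rr s1 s2; elim: s2 s1 => [|y s2 IH] [|x s1] //=; try by move=> _; apply: emb_nil.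
case: eqP => [->|_] H.
  by apply: emb_cons; [apply: Rr | apply: IH].
by apply: emb_skip; exact: (IH (x :: s1) H).
Qed.

Lemma sorted_subseq_nat (s1 s2 : seq nat) : sorted ltn s1 -> sorted ltn s2 ->
  {subset s1 <= s2} -> subseq s1 s2.
Proof.
elim: s2 s1 => [|y s2 IH] [|x s1] //=.
- by move=> _ _ /(_ x); rewrite inE eqxx => /(_ isT).
- move=> p1 p2 sub.
  have m2 := order_path_min ltn_trans p2.
  have m1 := order_path_min ltn_trans p1.
  case: eqP => [E|nxy].
    subst y; apply: IH; [exact: path_sorted p1 | exact: path_sorted p2 |].
    move=> z zs; have := sub z; rewrite !inE zs orbT => /(_ isT) /orP[/eqP E|//].
    by have := allP m1 z zs; rewrite E ltnn.
  have xs2 : x \in s2.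
    by have := sub x; rewrite !inE eqxx => /(_ isT) /orP[/eqP E|//]; case: nxy.
  have yx : (y < x)%N := allP m2 x xs2.
  apply: IH => //; first exact: path_sorted p2.
  move=> z zs; have := sub z zs; rewrite inE => /orP[/eqP E|//].
  move: zs; rewrite inE => /orP[/eqP E'|zs1]; first by subst; rewrite ltnn in yx.
  by have := allP m1 z zs1; rewrite E => /(ltn_trans yx); rewrite ltnn.
Qed.

Lemma tseq_map d n (t : basis r d n) : tseq t = map t (enum 'I_n).
Proof. by rewrite /tseq -codom_ffun. Qed.

Lemma size_tseq d n (t : basis r d n) : size (tseq t) = n.
Proof. by rewrite /tseq size_tuple card_ord. Qed.

Lemma nth_tseq d n (t : basis r d n) x0 (i : 'I_n) : nth x0 (tseq t) i = t i.
Proof. exact: nth_fgraph_ord. Qed.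

Lemma ble_refl_pt d n d' (u : basis r d n) (w : basis r d' n) : (d <= d')%N ->
  (forall i j, expo (u i) j <= expo (w i) j)%N -> ble u w.
Proof.
move=> dd H; split=> //; apply: (@emb_nth _ ple (fun _ => 0%N)).
  by rewrite /word !size_map.
move=> i; rewrite /word size_map size_tseq => lt.
rewrite (nth_map (mon0 d)) ?size_tseq // (nth_map (mon0 d')) ?size_tseq //.
rewrite -[i]/(nat_of_ord (Ordinal lt)) !nth_tseq => j; exact: H.
Qed.

Lemma ble_split d m N (w : basis r d N) (jf : 'I_m -> 'I_N) :
  (forall a b : 'I_m, (a < b)%N -> (jf a < jf b)%N) ->
  ble [ffun b => w (jf b)] w.
Proof.
move=> inc; split=> //; apply: emb_subseq; first by move=> x j.
rewrite !tseq_map.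
have -> : map [ffun b => w (jf b)] (enum 'I_m) = map w (map jf (enum 'I_m)).
  by elim: (enum _) => //= b s ->; rewrite ffunE.
apply: map_subseq.
have : subseq (map val (map jf (enum 'I_m))) (map val (enum 'I_N)).
  apply: sorted_subseq_nat.
  - rewrite -map_comp sorted_map.
    have : sorted (relpre val ltn) (enum 'I_m) by rewrite -sorted_map val_enum_ord iota_ltn_sorted.
    by apply: sub_sorted => a b /= ab; apply: inc.
  - by rewrite val_enum_ord iota_ltn_sorted.
  - by move=> z /mapP [x _ ->]; rewrite val_enum_ord mem_iota add0n ltn_ord.
case/subseqP => msk sz E; apply/subseqP; exists msk; rewrite ?size_map // in sz *.
by apply: (inj_map val_inj); rewrite E map_mask.
Qed.

Lemma ble_trans d n d' n' d'' n'' (t : basis r d n) (u : basis r d' n') (w : basis r d'' n'') :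
  ble t u -> ble u w -> ble t w.
Proof.
move=> [d1 e1] [d2 e2]; split; first exact: leq_trans d1 d2.
apply: (emb_trans _ e1 e2) => x y z H1 H2 j; exact: leq_trans (H1 j) (H2 j).
Qed.

Lemma ble_ext d n d' n' (t : basis r d n) (w : basis r d' n') :
  emb ple (word t) (word w) -> exists t' : basis r d' n,
    (forall i j, expo (t i) j <= expo (t' i) j)%N /\ subseq (tseq t') (tseq w).
Proof.
move=> /(@emb_map _ _ _ ple _ _ (tseq w) (tseq t)) [s' [sub [sz H]]].
rewrite size_tseq in sz.
exists ([ffun i : 'I_n => nth (mon0 d') s' i] : basis r d' n); split.
  move=> i j; have := H i (mon0 d) (mon0 d'); rewrite size_tseq nth_tseq ffunE.
  by move=> /(_ (ltn_ord i)).
suff -> : tseq ([ffun i : 'I_n => nth (mon0 d') s' i] : basis r d' n) = s' by [].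
apply: (@eq_from_nth _ (mon0 d')); first by rewrite size_tseq sz.
move=> i; rewrite size_tseq => lt.
by rewrite -[i]/(nat_of_ord (Ordinal lt)) nth_tseq ffunE.
Qed.

Section Ideal.
Local Unset Implicit Arguments.
Variable J : bisubset k r.
Hypothesis iJ : is_ideal J.

Lemma idealD d n F G : J d n F -> J d n G -> J d n (F + G)%R.
Proof. by case: iJ => _ H _ _ _; apply: H. Qed.
Lemma ideal0 d n : J d n 0%R.
Proof. by case: iJ. Qed.
Lemma idealZ d n c F : J d n F -> J d n (cscale c F).
Proof. by case: iJ => _ _ H _ _; apply: H. Qed.

Lemma ideal_sum d n (I : finType) (F : I -> comp k r d n) :
  (forall i, J d n (F i)) -> J d n (\sum_i F i)%R.
Proof.
move=> H; apply: (big_ind (J d n)); [exact: ideal0 | exact: idealD | by []].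
Qed.

Lemma mono_add d n (a b : k) (t : basis r d n) : mono (a + b)%R t = (mono a t + mono b t)%R.
Proof. by apply/ffunP => w; rewrite !ffunE; case: ifP; rewrite ?addr0. Qed.
Lemma mono_scale d n (a b : k) (t : basis r d n) : mono (a * b)%R t = cscale a (mono b t).
Proof. by apply/ffunP => w; rewrite !ffunE; case: ifP; rewrite ?mulr0. Qed.
Lemma mono0 d n (t : basis r d n) : mono 0%R t = 0%R.
Proof. by apply/ffunP => w; rewrite !ffunE; case: ifP. Qed.

Lemma star_step d n e (c : k) (t : basis r d n) (t' : basis r (e + d) n) :
  (forall i j, expo (t i) j <= expo (t' i) j) ->
  J d n (mono c t) -> J (e + d) n (mono c t').
Proof.
move=> le Jt.
have sumv : forall i, \sum_j (expo (t' i) j - expo (t i) j) = e.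
  by move=> i; rewrite sumnB // !expo_sum addnK.
pose vf i : {ffun 'I_r -> 'I_e.+1} := [ffun j => inord (expo (t' i) j - expo (t i) j)].
have vfE : forall i j, (vf i j : nat) = expo (t' i) j - expo (t i) j.
  move=> i j; rewrite ffunE inordK // ltnS; apply: (leq_trans _ (eq_leq (sumv i))).
  by rewrite (bigD1 j) //= leq_addr.
have vP : forall i, \sum_(j < r) (vf i j : nat) == e.
  by move=> i; rewrite (eq_bigr _ (fun j _ => vfE i j)) sumv.
pose v : basis r e n := [ffun i => exist _ (vf i) (vP i)].
have vE : forall i j, expo (v i) j = expo (t' i) j - expo (t i) j.
  by move=> i j; rewrite /expo ffunE /= vfE.
case: iJ => _ _ _ Hstar _.
have := Hstar d e n (mono 1%R v) (mono c t) Jt.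
congr (J _ _ _); apply/ffunP => x; rewrite !ffunE.
rewrite (bigD1 v) //= [X in (_ + X)%R]big1 ?addr0; last first.
  move=> a na; apply: big1 => b _; rewrite !ffunE (negbTE na) mul0r; by case: ifP.
rewrite (bigD1 t) //= [X in (_ + X)%R]big1 ?addr0; last first.
  move=> b nb; rewrite !ffunE (negbTE nb) mulr0; by case: ifP.
rewrite !ffunE !eqxx mul1r.
have -> : (x == t') = [forall a, forall j, (val (val (x a) j) : nat) == val (val (v a) j) + val (val (t a) j)].
  apply/eqP/forallP => [-> a|H]; first apply/forallP => j.
    by rewrite -!/(expo _ _) vE subnK.
  apply: basis_ext => a j; have /forallP/(_ j)/eqP := H a.
  by rewrite -!/(expo _ _) vE subnK.
by [].
Qed.


Lemma ins_one d n c (w : basis r d n.+1) (p : 'I_n.+1) :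
  J d n (mono c [ffun j => w (lift p j)]) -> J d n.+1 (mono c w).
Proof.
move=> Jw; case: iJ => _ _ _ _ Hsplit.
have spl : is_split (fun _ : 'I_1 => (p : 'I_(1 + n))) (lift p : 'I_n -> 'I_(1 + n)).
  split.
  - by move=> [[|a] ?] [[|b] ?].
  - by move=> a b ab; rewrite /= !ltnNge /= leq_bump2 -ltnNge.
  - by move=> a b; apply: neq_lift.
have := Hsplit d 1 n _ _ (mono 1%R [ffun _ : 'I_1 => w p]) _ spl Jw.
congr (J _ _ _); apply/ffunP => x; rewrite !ffunE.
case: (eqVneq x w) => [->|nxw].
  by rewrite !eqxx mul1r.
case: eqP => [E1|_]; last by rewrite mul0r.
case: eqP => [E2|_]; last by rewrite mulr0.
case/eqP: nxw; apply/ffunP => i; case: (unliftP p i) => [j ->|->].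
  by have := congr1 (fun f : basis r d n => f j) E2; rewrite !ffunE.
by have := congr1 (fun f : basis r d 1 => f ord0) E1; rewrite !ffunE.
Qed.

Lemma seq_remove (T : eqType) (s u : seq T) : subseq s u -> size s < size u ->
  exists i, i < size u /\ subseq s (take i u ++ drop i.+1 u).
Proof.
elim: u s => [|x u IH] [|y s] //=.
- by move=> _ _; exists 0; split=> //; rewrite sub0seq.
- case: eqP => [->|nyx] sub lt.
    have [i [ilt isub]] := IH s sub lt.
    by exists i.+1; split=> //=; rewrite eqxx.
  by exists 0; split=> //=; rewrite drop0.
Qed.

Lemma tseq_lift d n (w : basis r d n.+1) (p : 'I_n.+1) :
  tseq [ffun j => w (lift p j)] = take p (tseq w) ++ drop p.+1 (tseq w).
Proof.
have sz : forall m (t : basis r d m), size (tseq t) = m.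
  by move=> m t; rewrite /tseq size_tuple card_ord.
apply: (@eq_from_nth _ (mon0 d)).
  rewrite size_cat size_take size_drop !sz ltn_ord.
  by rewrite subSS addnBA ?addKn // -ltnS.
move=> q; rewrite sz => qlt.
rewrite nth_cat size_take sz ltn_ord.
rewrite -[q]/(nat_of_ord (Ordinal qlt)) /tseq nth_fgraph_ord ffunE.
case: ltnP => qp.
  rewrite nth_take //.
  have -> : lift p (Ordinal qlt) = widen_ord (leqnSn n) (Ordinal qlt).
    by apply: val_inj; rewrite /= /bump leqNgt qp.
  by rewrite -[X in nth _ _ X]/(nat_of_ord (widen_ord (leqnSn n) (Ordinal qlt))) nth_fgraph_ord.
rewrite nth_drop.
have -> : lift p (Ordinal qlt) = Ordinal (qlt : q.+1 < n.+1).
  by apply: val_inj; rewrite /= /bump qp.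
by rewrite addSn subnKC // -[X in nth _ _ X]/(nat_of_ord (Ordinal (qlt : q.+1 < n.+1))) nth_fgraph_ord.
Qed.

Lemma ins_step d c : forall n' (w : basis r d n') n (t : basis r d n),
  subseq (tseq t) (tseq w) -> J d n (mono c t) -> J d n' (mono c w).
Proof.
have sz : forall m (t : basis r d m), size (tseq t) = m.
  by move=> m t; rewrite /tseq size_tuple card_ord.
elim=> [|n' IH] w n t sub Jt.
  have := size_subseq sub; rewrite !sz leqn0 => /eqP n0; subst n.
  suff -> : w = t by [].
  by apply/ffunP => -[].
case: (ltnP n n'.+1) => lt.
  have := @seq_remove _ _ _ sub; rewrite !sz => /(_ lt) [i [ilt isub]].
  apply: (@ins_one _ _ _ _ (Ordinal ilt)); apply: (IH _ _ t) => //.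
  by rewrite tseq_lift.
have nE : n = n'.+1.
  by apply/eqP; rewrite eqn_leq lt andbT; have := size_subseq sub; rewrite !sz.
subst n; have := size_subseq_leqif sub; rewrite !sz => -[_].
move=> /esym/eqP; rewrite eqxx => /eqP E.
suff -> : w = t by [].
by apply: (can_inj fgraphK); apply: val_inj; rewrite -[LHS]/(tseq w) -(eqP E).
Qed.


Lemma gen_step d n d' n' c (t : basis r d n) (w : basis r d' n') :
  ble t w -> J d n (mono c t) -> J d' n' (mono c w).
Proof.
move=> [dd /ble_ext [t' [le sub]]] Jt.
have E : d' = (d' - d) + d by rewrite subnK.
move: (d' - d) E => e E; subst d'.
apply: (@ins_step (e + d) c n' w n t' sub); exact: (@star_step d n e c t t' le Jt).
Qed.

End Ideal.

Inductive kgen (P : k -> Prop) : k -> Prop :=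
| kg0 : kgen P 0%R
| kgadd a c x : P c -> kgen P x -> kgen P (a * c + x)%R.

Lemma kgen_add P x y : kgen P x -> kgen P y -> kgen P (x + y)%R.
Proof.
elim=> [|a c x' Pc _ IH] Hy; first by rewrite add0r.
by rewrite -addrA; apply: kgadd => //; apply: IH.
Qed.

Lemma kgen_mul P b x : kgen P x -> kgen P (b * x)%R.
Proof.
elim=> [|a c x' Pc _ IH]; first by rewrite mulr0; apply: kg0.
by rewrite mulrDr mulrA; apply: kgadd.
Qed.

Lemma kgen_sum P (I : finType) (F : I -> k) : (forall i, kgen P (F i)) ->
  kgen P (\sum_i F i)%R.
Proof.
move=> H; apply: (big_ind (kgen P)); [exact: kg0 | exact: kgen_add | by []].
Qed.

Lemma kgen_gen P c : P c -> kgen P c.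
Proof. by move=> Pc; rewrite -[c]addr0 -[c in (c + _)%R]mul1r; apply: kgadd => //; apply: kg0. Qed.

Lemma kgen_kgen P Q x : (forall c, P c -> kgen Q c) -> kgen P x -> kgen Q x.
Proof.
move=> H; elim=> [|a c x' Pc _ IH]; first exact: kg0.
by apply: kgen_add => //; apply: kgen_mul; apply: H.
Qed.

Lemma kgen_mono P Q x : (forall c, P c -> Q c) -> kgen P x -> kgen Q x.
Proof. by move=> H; apply: kgen_kgen => c /H; apply: kgen_gen. Qed.

Record gen := Gen { gd : nat; gn : nat; gt : basis r gd gn; gc : k }.

Definition Pw (S : gen -> Prop) d n (w : basis r d n) : k -> Prop :=
  fun c => exists g, S g /\ gc g = c /\ ble (gt g) w.

Definition Ichar (S : gen -> Prop) : bisubset k r :=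
  fun d n F => forall w, kgen (Pw S w) (F w).

Lemma Pw_mono S d n d' n' (u : basis r d n) (w : basis r d' n') :
  ble u w -> forall x, kgen (Pw S u) x -> kgen (Pw S w) x.
Proof.
move=> H x; apply: kgen_mono => c [g [Sg [gcc bl]]]; exists g; split=> //; split=> //.
exact: ble_trans bl H.
Qed.

Lemma Ichar_ideal S : is_ideal (Ichar S).
Proof.
split.
- by move=> d n w; rewrite ffunE; apply: kg0.
- by move=> d n F G HF HG w; rewrite ffunE; apply: kgen_add.
- by move=> d n c F HF w; rewrite ffunE; apply: kgen_mul.
- move=> d e n G F HF w; rewrite ffunE; apply: kgen_sum => t; apply: kgen_sum => u.
  case: ifP => [/forallP H|_]; last exact: kg0.
  apply: kgen_mul; apply: (@Pw_mono _ _ _ _ _ u) => //.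
  apply: ble_refl_pt; first exact: leq_addl.
  move=> i j; have /forallP/(_ j)/eqP := H i; rewrite -!/(expo _ _) => ->.
  exact: leq_addl.
- move=> d n m ifun jfun G F [_ inc _] HF w; rewrite ffunE; apply: kgen_mul.
  apply: (@Pw_mono _ _ _ _ _ [ffun b => w (jfun b)]); last exact: HF.
  exact: ble_split.
Qed.

Lemma Ichar_contains S (X : bisubset k r) :
  (forall d n F, X d n F -> exists c (t : basis r d n), F = mono c t /\ S (Gen t c)) ->
  subset_of X (Ichar S).
Proof.
move=> H d n F XF w; have [c [t [-> St]]] := H d n F XF; rewrite ffunE.
case: eqP => [->|_]; last exact: kg0.
apply: kgen_gen; exists (Gen t c); split=> //; split=> //=.
by apply: ble_refl_pt.
Qed.

Lemma mono_decomp d n (F : comp k r d n) : F = (\sum_w mono (F w) w)%R.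
Proof.
apply/ffunP => x; rewrite sum_ffunE (bigD1 x) //= ffunE eqxx big1 ?addr0 //.
by move=> w nw; rewrite ffunE eq_sym (negbTE nw).
Qed.

Lemma Ichar_min S (J : bisubset k r) : is_ideal J ->
  (forall g, S g -> J _ _ (mono (gc g) (gt g))) -> subset_of (Ichar S) J.
Proof.
move=> iJ HS d n F HF; rewrite (mono_decomp F); apply: (ideal_sum J iJ) => w.
elim: (HF w) => [|a c x [g [Sg [<- bl]]] _ IH].
  by rewrite mono0; apply: (ideal0 J iJ).
rewrite mono_add mono_scale; apply: (idealD J iJ) => //; apply: (idealZ J iJ).
exact: (@gen_step J iJ _ _ _ _ _ _ _ bl (HS g Sg)).
Qed.

End B.
Set Implicit Arguments. Unset Strict Implicit.

Section C.
Variable k : comPzRingType.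
Variable r : nat.
Hypothesis hr : (0 < r)%N.

Lemma In_enum (T : eqType) (s : seq T) x : x \in s -> List.In x s.
Proof. by elim: s => //= y s IH; rewrite inE => /orP[/eqP->|/IH]; [left|right]. Qed.

Lemma In_nth (T : Type) (x0 : T) (s : seq T) i : (i < size s)%N -> List.In (nth x0 s i) s.
Proof. by elim: s i => //= y s IH [|i] /=; [left | move/IH; right]. Qed.

Lemma wqo_ple : wqo (@ple r).
Proof.
apply: (wqo_ext _ (wqo_dickson (enum 'I_r))) => a b H j; apply: H.
by apply: In_enum; rewrite mem_enum.
Qed.

Lemma wqo_gen : wqo (fun g h : gen k r => ble (gt g) (gt h)).
Proof.
apply: (wqo_ext (R1 := fun g h => gd g <= gd h /\ emb (@ple r) (word (gt g)) (word (gt h)))%N).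
  by move=> g h.
apply: wqo_prod.
- exact: (@wqo_pull _ _ (fun a b : nat => (a <= b)%N) (@gd k r) wqo_nat).
- by move=> x y z; apply: leq_trans.
- apply: (wqo_pull (fun g => word (gt g))); apply: higman; first exact: wqo_ple.
  by move=> x y z H1 H2 j; apply: leq_trans (H1 j) (H2 j).
Qed.

Definition Cov (L : seq (gen k r)) (g : gen k r) :=
  kgen (fun c => exists h, List.In h L /\ gc h = c /\ ble (gt h) (gt g)) (gc g).

Lemma finite_cover (S : gen k r -> Prop) : noetherian k ->
  exists L : seq (gen k r), (forall g, List.In g L -> S g) /\ forall g, S g -> Cov L g.
Proof.
move=> noeth; apply: NNPP => nE.
have H1 : forall L, exists g, (forall h, List.In h L -> S h) -> S g /\ ~ Cov L g.
  move=> L; case: (classic (forall h, List.In h L -> S h)) => [HL|nHL]; last first.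
    by exists (@Gen k r 0 0 [ffun i => mon0 hr 0] 0%R).
  apply: NNPP => nx; apply: nE; exists L; split=> // g Sg.
  apply: NNPP => nC; apply: nx; exists g => _; by split.
have [nx Hnx] := cid_fun H1.
pose pre n := iter n (fun L => rcons L (nx L)) [::].
have spre : forall n, size (pre n) = n by elim=> //= n IH; rewrite size_rcons IH.
pose g0 := @Gen k r 0 0 [ffun i => mon0 hr 0] 0%R.
pose p i := nth g0 (pre i.+1) i.
have preg : forall m n, (n < m)%N -> nth g0 (pre m) n = p n.
  elim=> // m IH n; rewrite ltnS leq_eqVlt => /orP[/eqP->|lt]; first by [].
  by rewrite /= nth_rcons spre lt IH.
have pE : forall n, p n = nx (pre n) by move=> n; rewrite /p /= nth_rcons spre ltnn eqxx.
have preS : forall n h, List.In h (pre n) -> S h.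
  elim=> // n IH h /=; rewrite -cats1 => Hin.
  case: (List.in_app_or _ _ _ Hin) => [/IH//|[E|[]]]; subst h.
  by case: (Hnx (pre n) IH).
have pS : forall n, S (p n) /\ ~ Cov (pre n) (p n).
  by move=> n; rewrite pE; apply: Hnx; apply: preS.
have [phi [inc Hphi]] := wqo_asc wqo_gen (fun x y z => @ble_trans _ _ _ _ _ _ _ _ _ _) p.
pose K m := kgen (fun c => exists i, (i < m)%N /\ c = gc (p (phi i))).
have Kmono : forall m m' x, (m <= m')%N -> K m x -> K m' x.
  move=> m m' x mm; apply: kgen_mono => c [i [im ->]]; exists i; split=> //.
  exact: leq_trans im mm.
pose Kall x := exists m, K m x.
have iK : ring_ideal Kall.
  split; first by exists 0; apply: kg0.
    move=> x y [m1 H1'] [m2 H2']; exists (maxn m1 m2); apply: kgen_add.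
      by apply: (Kmono m1) => //; apply: leq_maxl.
    by apply: (Kmono m2) => //; apply: leq_maxr.
  by move=> c x [m Hm]; exists m; apply: kgen_mul.
have [s Hs] := noeth Kall iK.
have sK : forall i : 'I_(size s), exists m, K m (s`_i)%R.
  move=> i; apply/(Hs (s`_i)%R); exists (fun j => if j == i then 1%R else 0%R).
  rewrite (bigD1 i) //= eqxx mul1r big1 ?addr0 // => j nj.
  by rewrite (negbTE nj) mul0r.
have [mf Hmf] := cid_fun sK.
pose M := (\max_(i < size s) mf i)%N.
have KM : K M (gc (p (phi M))).
  have : Kall (gc (p (phi M))).
    by exists M.+1; apply: kgen_gen; exists M; split.
  move/Hs => [c ->]; apply: kgen_sum => i; apply: kgen_mul.
  by apply: (Kmono (mf i)); [apply: leq_bigmax | apply: Hmf].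
case: (pS (phi M)) => _; apply; rewrite /Cov.
apply: kgen_mono KM => c [i [iM ->]].
exists (p (phi i)); split; last by split=> //; apply: Hphi.
rewrite -(preg (phi M)); last exact: incr_mono.
by apply: In_nth; rewrite spre; apply: incr_mono.
Qed.

End C.
Unset Implicit Arguments.

Lemma In_map_inv (A B : Type) (f : A -> B) (L : seq A) y :
  List.In y (map f L) -> exists x, f x = y /\ List.In x L.
Proof.
elim: L => //= a L IH [E|/IH [x [E Hx]]]; first by exists a; split=> //; left.
by exists x; split=> //; right.
Qed.

Lemma In_map (A B : Type) (f : A -> B) (L : seq A) x :
  List.In x L -> List.In (f x) (map f L).
Proof. by elim: L => //= a L IH [->|/IH]; [left|right]. Qed.

Theorem corollary2p5 (k : comPzRingType) (r : nat) :
  (0 < r)%N -> noetherian k ->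
  forall I : bisubset k r, monomial_ideal I -> finitely_generated I.
Proof.
move=> hr noeth I [X [Xmon [iI XI Imin]]].
pose S (g : gen k r) := X (gd g) (gn g) (mono (gc g) (gt g)).
have [L [LS Lcov]] := finite_cover hr S noeth.
pose pack (g : gen k r) : {d : nat & {n : nat & comp k r d n}} :=
  existT _ (gd g) (existT _ (gn g) (mono (gc g) (gt g))).
exists (map pack L); split=> //.
- move=> d n F Hin; have [g [E gL]] := @In_map_inv _ _ pack L _ Hin.
  pose P (x : {d : nat & {n : nat & comp k r d n}}) :=
    I (projT1 x) (projT1 (projT2 x)) (projT2 (projT2 x)).
  suff : P (existT _ d (existT _ n F)) by [].
  by rewrite -E; apply: XI; apply: LS.
- move=> J iJ sJ.
  have sub1 : subset_of I (Ichar S).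
    apply: (Imin _ (Ichar_ideal hr S)).
    apply: (Ichar_contains hr) => d n F XF; have [c [t E]] := Xmon d n F XF.
    by exists c, t; split=> //; rewrite /S /mono /= -E.
  have sub2 : subset_of (Ichar S) (Ichar (fun g => List.In g L)).
    move=> d n F HF w; apply: kgen_kgen (HF w) => c [g [Sg [<- bl]]].
    apply: kgen_mono (Lcov g Sg) => c' [h [hL [<- bl']]].
    by exists h; split=> //; split=> //; apply: ble_trans bl' bl.
  have sub3 : subset_of (Ichar (fun g => List.In g L)) J.
    apply: (Ichar_min hr) => // g gL; apply: sJ.
    exact: (@In_map _ _ pack L g gL).
  by move=> d n F /sub1 /sub2 /sub3.
Qed.
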